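(* Let $L$ be the star fork, the subfork, or the dot, and let $K,K'$ be proper pseudohexes such that $K$ is obtained from $K'$ by $L$-addition. Then $L_K$ can be safely reduced.
   Context: Pseudohex. A pseudohex is a bipartite graph $K$ (parallel edges allowed, no loops) whose edges are coloured blue, red and white, which is either empty or satisfies: (i) the blue edges form vertex-disjoint 6-cycles covering $V(K)$, called the hexagons of $K$; if a hexagon is the 6-cycle $v_0v_1\cdots v_5v_0$ we write $\bar{v_i}=v_{i+3}$ (indices mod 6); (ii) for each vertex $x$, $\{x,\bar x\}$ is a red edge of $K$ (further red edges may exist); (iii) the white edges form a perfect matching of $K$. A white edge $e=\{x,y\}$ is real if $\bar e=\{\bar x,\bar y\}$ is also a white edge and the only red edges sharing a vertex with $e$ or $\bar e$ are $\{x,\bar x\}$ and $\{y,\bar y\}$; non-real white edges are derived. An end is a red edge parallel to a white edge. $G^K$ is the graph whose vertices are the hexagons of $K$, two hexagons being adjacent iff some pair of real white edges $e,\bar e$ joins them. $K$ is proper if it has no end and $G^K$ is 2-connected with no cycle of length 2. Reduction. Let $h$ be a hexagon and $N$ one of the two perfect matchings of its blue 6-cycle. For each edge of $N$, let $P$ be the path formed by that edge and the two white edges adjacent to it. If $P$ is not a cycle of length 2, add a new white edge $e_P$ joining the end vertices of $P$, and for each red edge $\{u,w\}$ with $w$ an interior vertex of $P$ add a red edge $\{u,w'\}$ where $w'$ is the endpoint of $e_P$ in the same bipartition class as $w$. If $P$ is a cycle of length 2, then for each red edge $\{u,w\}$ with $w$ an interior vertex of $P$ add a red edge $\{u,\bar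 u\}$. Finally delete the vertices of $h$. Reducing hexagons $h_1,\dots,h_l$ by perfect matchings $N_1,\dots,N_l$ means performing these reductions successively; its contracted paths are the components (paths and cycles) of the subgraph of $K$ formed by $N_1\cup\dots\cup N_l$ together with all white edges having an endpoint in $V(h_1)\cup\dots\cup V(h_l)$. The reduction is safe if every contracted path/cycle contains at most one derived white edge of $K$; a set of hexagons can be safely reduced if some choice of perfect matchings gives a safe reduction. Fork-type graphs and addition. The star fork is $K_{1,3}$; the bold star fork has one half-edge at each of its three leaves. The subfork is a single edge (two vertices); the bold subfork has one half-edge at each of its two vertices. The dot is a single vertex; a bold dot has two or three half-edges attached to it. A graph is obtained from $G'$ by addition of the bold $L$ if it is obtained from the disjoint union of $G'$ and $L$ by joining each half-edge of the bold $L$ to a distinct vertex of degree 2 of $G'$. $K$ is obtained from $K'$ by $L$-addition if $G^K$ is obtained from $G^{K'}$ by addition of the bold $L$; $L_K$ is the set of hexagons of $K$ corresponding to the vertices of $L$. *)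

(* Defs.v *)
From HB Require Import structures.
From mathcomp Require Import all_boot.
From Stdlib Require Import Relations.Relation_Operators.
Set Implicit Arguments. Unset Strict Implicit. Unset Printing Implicit Defensive.

Inductive colour := Blue | Red | White.

(* Undirected multigraph: each edge e has two endpoints csrc e, ctgt e
   (the orientation is irrelevant); parallel edges are distinct edge objects. *)
Record cgraph := CGraph {
  cV : finType; cE : finType;
  csrc : cE -> cV; ctgt : cE -> cV; ccol : cE -> colour }.

Definition joins (K : cgraph) (e : cE K) (x y : cV K) : Prop :=
  (csrc e = x /\ ctgt e = y) \/ (csrc e = y /\ ctgt e = x).
Definition incident (K : cgraph) (e : cE K) (x : cV K) : Prop :=
  csrc e = x \/ ctgt e = x.
Definition is_blue (K : cgraph) (e : cE K) : Prop := ccol e = Blue.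
Definition is_red (K : cgraph) (e : cE K) : Prop := ccol e = Red.
Definition is_white (K : cgraph) (e : cE K) : Prop := ccol e = White.

Definition succ6 (i : 'I_6) : 'I_6 := inord (i.+1 %% 6).

(* c 0 c 1 ... c 5 c 0 is a blue 6-cycle (edges b i joining c i, c (i+1)),
   and the only blue edges touching its vertices are its own edges:
   i.e. this 6-cycle is a whole component of the blue subgraph. *)
Definition hexcycle (K : cgraph) (c : 'I_6 -> cV K) (b : 'I_6 -> cE K) : Prop :=
  injective c /\
  (forall i, is_blue (b i) /\ joins (b i) (c i) (c (succ6 i))) /\
  (forall e, is_blue e -> forall i, incident e (c i) -> exists j, e = b j).

(* opp K x y  :<->  y = bar x *)
Definition opp (K : cgraph) (x y : cV K) : Prop :=
  exists c b, @hexcycle K c b /\ c ord0 = x /\ c (inord 3) = y.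

Definition is_hex (K : cgraph) (S : {set cV K}) : Prop :=
  exists c b, @hexcycle K c b /\ S = [set c i | i : 'I_6].

Definition pseudohex (K : cgraph) : Prop :=
  (forall e : cE K, csrc e <> ctgt e) /\
  (exists side : cV K -> bool, forall e : cE K, side (csrc e) <> side (ctgt e)) /\
  (* (i) blue edges form vertex-disjoint 6-cycles covering V(K) *)
  (forall x : cV K, exists c b, @hexcycle K c b /\ c ord0 = x) /\
  (forall x y : cV K, opp x y -> exists r, is_red r /\ joins r x y) /\
  (forall x : cV K, exists e, is_white e /\ incident e x /\
      forall e', is_white e' -> incident e' x -> e' = e).

Definition real_white (K : cgraph) (e : cE K) : Prop :=
  is_white e /\
  exists (xb yb : cV K) (e' : cE K),
    opp (csrc e) xb /\ opp (ctgt e) yb /\ is_white e' /\ joins e' xb yb /\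
    forall r, is_red r ->
      (incident r (csrc e) \/ incident r (ctgt e) \/ incident r xb \/ incident r yb) ->
      joins r (csrc e) xb \/ joins r (ctgt e) yb.

Definition derived (K : cgraph) (e : cE K) : Prop := is_white e /\ ~ real_white e.

Definition is_end (K : cgraph) (r : cE K) : Prop :=
  is_red r /\ exists w, is_white w /\ joins w (csrc r) (ctgt r).

Definition GKjoins (K : cgraph) (e : cE K) (S T : {set cV K}) : Prop :=
  (csrc e \in S /\ ctgt e \in T) \/ (csrc e \in T /\ ctgt e \in S).

Definition GKadj (K : cgraph) (S T : {set cV K}) : Prop :=
  is_hex S /\ is_hex T /\ S <> T /\ exists e, real_white e /\ GKjoins e S T.

(* G^K has a cycle of length 2: two distinct edges {e1, bar e1}, {e2, bar e2}
   of G^K joining the same two hexagons *)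
Definition GK_2cycle (K : cgraph) : Prop :=
  exists (S T : {set cV K}) (e1 e2 : cE K),
    is_hex S /\ is_hex T /\ S <> T /\
    real_white e1 /\ real_white e2 /\ GKjoins e1 S T /\ GKjoins e2 S T /\
    e1 <> e2 /\
    ~ (exists xb yb, opp (csrc e1) xb /\ opp (ctgt e1) yb /\ joins e2 xb yb).

Definition reach_in (T : Type) (R : T -> T -> Prop) (P : T -> Prop) : T -> T -> Prop :=
  clos_refl_trans T (fun x y => P x /\ P y /\ R x y).

Definition two_connected_GK (K : cgraph) : Prop :=
  (exists S1 S2 S3 : {set cV K}, is_hex S1 /\ is_hex S2 /\ is_hex S3 /\
      S1 <> S2 /\ S1 <> S3 /\ S2 <> S3) /\
  (forall S T, is_hex S -> is_hex T -> reach_in (@GKadj K) (@is_hex K) S T) /\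
  (forall Z S T, is_hex Z -> is_hex S -> is_hex T -> S <> Z -> T <> Z ->
      reach_in (@GKadj K) (fun U => is_hex U /\ U <> Z) S T).

Definition proper_pseudohex (K : cgraph) : Prop :=
  pseudohex K /\ (forall r : cE K, ~ is_end r) /\ two_connected_GK K /\ ~ GK_2cycle K.

Inductive forktype := StarFork | Subfork | Dot.

(* vertices of L are 0 .. L_size t - 1; star fork: centre 0, leaves 1,2,3 *)
Definition L_size (t : forktype) : nat :=
  match t with StarFork => 4 | Subfork => 2 | Dot => 1 end.

Definition L_adj (t : forktype) (i j : nat) : bool :=
  match t with
  | StarFork => ((i == 0) && (j != 0)) || ((j == 0) && (i != 0))
  | Subfork => i != j
  | Dot => false
  end.

(* the list of vertices of L carrying a half-edge (with multiplicity) in the bold L *)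
Definition bold_halfedges (t : forktype) (s : seq nat) : Prop :=
  match t with
  | StarFork => s = [:: 1; 2; 3]
  | Subfork => s = [:: 0; 1]
  | Dot => s = [:: 0; 0] \/ s = [:: 0; 0; 0]
  end.

Definition deg2 (K : cgraph) (S : {set cV K}) : Prop :=
  exists A B, A <> B /\ GKadj S A /\ GKadj S B /\
    forall C, GKadj S C -> C = A \/ C = B.

(* G^K is isomorphic, via (f1, f2), to the graph obtained from G^{K'} by addition
   of the bold L: f1 maps hexagons of K' and f2 maps vertices of L to hexagons of K;
   L_K = { f2 i | i < L_size t }. *)
Definition L_addition (t : forktype) (K K' : cgraph)
    (f1 : {set cV K'} -> {set cV K}) (f2 : nat -> {set cV K}) : Prop :=
  exists (s : seq nat) (att : nat -> {set cV K'}),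
    bold_halfedges t s /\
    (forall k, k < size s -> is_hex (att k) /\ deg2 (att k)) /\
    (forall k l, k < size s -> l < size s -> att k = att l -> k = l) /\
    (forall A, is_hex A -> is_hex (f1 A)) /\
    (forall i, i < L_size t -> is_hex (f2 i)) /\
    (forall A B, is_hex A -> is_hex B -> f1 A = f1 B -> A = B) /\
    (forall i j, i < L_size t -> j < L_size t -> f2 i = f2 j -> i = j) /\
    (forall A i, is_hex A -> i < L_size t -> f1 A <> f2 i) /\
    (forall S, is_hex S ->
       (exists A, is_hex A /\ S = f1 A) \/ (exists i, i < L_size t /\ S = f2 i)) /\
    (forall A B, is_hex A -> is_hex B -> (GKadj (f1 A) (f1 B) <-> GKadj A B)) /\
    (forall i j, i < L_size t -> j < L_size t ->
       (GKadj (f2 i) (f2 j) <-> L_adj t i j)) /\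
    (forall A i, is_hex A -> i < L_size t ->
       (GKadj (f1 A) (f2 i) <->
        exists k, k < size s /\ nth 0 s k = i /\ att k = A)).

(* N is the union of the chosen perfect
   matchings N_h of the blue 6-cycles of the h in Hs; F is the edge set
   N ∪ {white edges with an endpoint in V(Hs)}, whose components are the
   contracted paths/cycles; safety: each component contains at most one
   derived white edge of K. *)
Definition safely_reducible (K : cgraph) (Hs : {set cV K} -> Prop) : Prop :=
  exists N : cE K -> Prop,
    (forall e, N e -> is_blue e /\ exists S, Hs S /\ csrc e \in S /\ ctgt e \in S) /\
    (forall S, Hs S -> forall x, x \in S ->
        exists e, N e /\ incident e x /\ forall e', N e' -> incident e' x -> e' = e) /\
    let F := fun e => N e \/ (is_white e /\ exists S, Hs S /\ (csrc e \in S \/ ctgt e \in S)) in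
    forall e1 e2, F e1 -> F e2 -> derived e1 -> derived e2 ->
      clos_refl_trans (cV K) (fun x y => exists e, F e /\ joins e x y) (csrc e1) (csrc e2) ->
      e1 = e2.

(* Main.v *)
Require Import Defs.
From mathcomp Require Import all_boot zify.
From Stdlib Require Import Relations.Relation_Operators Classical.
Set Implicit Arguments. Unset Strict Implicit. Unset Printing Implicit Defensive.

Definition mk6 (n : nat) : 'I_6 := Ordinal (ltn_pmod n (isT : 0 < 6)).
Definition add6 (k m : 'I_6) : 'I_6 := mk6 (k + m).
Definition suc6 (k : 'I_6) : 'I_6 := mk6 k.+1.
Definition pred6 (k : 'I_6) : 'I_6 := mk6 (k + 5).
Definition t3 (k : 'I_6) : 'I_6 := mk6 (k + 3).
Definition pr (k : 'I_6) : nat := k %% 3.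
Definition np (s : bool) (k : 'I_6) : 'I_6 := if odd k == s then suc6 k else pred6 k.

Lemma succ6E k : succ6 k = suc6 k.
Proof. by apply/val_inj; rewrite /succ6 /= inordK // ltn_pmod. Qed.
Lemma inord3 : (inord 3 : 'I_6) = mk6 3.
Proof. by apply/val_inj; rewrite /= inordK. Qed.

Ltac ord6 k := let H := fresh in case: k => [[|[|[|[|[|[|?]]]]]] H] //.
Ltac vinj := apply/val_inj; reflexivity.

Lemma suc_add k m : suc6 (add6 k m) = add6 (suc6 k) m.
Proof. ord6 k; ord6 m; vinj. Qed.
Lemma add_inj k k' m : add6 k m = add6 k' m -> k = k'.
Proof. ord6 k; ord6 k'; ord6 m; move/(congr1 val) => //= _; vinj. Qed.
Lemma add_surj (j m : 'I_6) : add6 (add6 j (mk6 (6 - m))) m = j.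
Proof. ord6 j; ord6 m; vinj. Qed.
Lemma add0k k : add6 ord0 k = k.
Proof. ord6 k; vinj. Qed.
Lemma add3k k : add6 (mk6 3) k = t3 k.
Proof. ord6 k; vinj. Qed.
Lemma t3t3 k : t3 (t3 k) = k.
Proof. ord6 k; vinj. Qed.
Lemma suc_pred k : suc6 (pred6 k) = k.
Proof. ord6 k; vinj. Qed.
Lemma suc_inv j k : suc6 j = k -> j = pred6 k.
Proof. ord6 j; ord6 k; move/(congr1 val) => //= _; vinj. Qed.
Lemma iter_suc (j k : 'I_6) : iter ((k + 6 - j)) suc6 j = k.
Proof. ord6 j; ord6 k; vinj. Qed.
Lemma pr_lt k : pr k < 3.
Proof. by rewrite /pr ltn_pmod. Qed.
Lemma pr_t3 k : pr (t3 k) = pr k.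
Proof. by ord6 k. Qed.
Lemma pr_eq k k' : pr k = pr k' -> k' = k \/ k' = t3 k.
Proof.
ord6 k; ord6 k'; rewrite /pr /= => // _;
  by [left; vinj | right; vinj].
Qed.
Lemma np_inv s m : np s (np s m) = m.
Proof. case: s; ord6 m; vinj. Qed.
Lemma np_pr s m : pr (np s m) <> pr m.
Proof. by case: s; ord6 m. Qed.
Lemma np_t3 s m : pr (np s (t3 m)) <> pr (np s m).
Proof. by case: s; ord6 m. Qed.
Lemma np_neg s m : pr (np (~~ s) m) <> pr (np s m).
Proof. by case: s; ord6 m. Qed.
Lemma np_odd s m : odd (np s m) = ~~ odd m.
Proof. by case: s; ord6 m. Qed.
Lemma odd_t3 m : odd (t3 m) = ~~ odd m.
Proof. by ord6 m. Qed.
Definition ej (s : bool) (k : 'I_6) : 'I_6 := if odd k == s then k else pred6 k.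
Lemma ej_odd s k : odd (ej s k) = s.
Proof. by case: s; ord6 k. Qed.
Lemma ej_spec s k : (k = ej s k /\ np s k = suc6 (ej s k)) \/ (k = suc6 (ej s k) /\ np s k = ej s k).
Proof. case: s; ord6 k; by [left; split; vinj | right; split; vinj]. Qed.
Lemma np_of_edge s (j : 'I_6) : odd j = s -> np s j = suc6 j /\ np s (suc6 j) = j.
Proof. case: s; ord6 j => // _; split; vinj. Qed.
Lemma ej_self s (j : 'I_6) : odd j = s -> ej s j = j.
Proof. by rewrite /ej => ->; rewrite eqxx. Qed.
Lemma ej_suc s (j : 'I_6) : odd j = s -> ej s (suc6 j) = j.
Proof. case: s; ord6 j => // _; vinj. Qed.


Lemma joins2 (K : cgraph) (e : cE K) a b x y :
  joins e a b -> joins e x y -> (a = x /\ b = y) \/ (a = y /\ b = x).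
Proof. by rewrite /joins => [[[-> ->]|[-> ->]]] [[-> ->]|[-> ->]]; auto. Qed.
Lemma joins_sym (K : cgraph) (e : cE K) x y : joins e x y -> joins e y x.
Proof. by rewrite /joins; tauto. Qed.
Lemma joins_inc (K : cgraph) (e : cE K) x y : joins e x y -> incident e x.
Proof. by rewrite /joins /incident => [[[-> _]|[_ ->]]]; auto. Qed.
Lemma joins_other (K : cgraph) (e : cE K) x y w : joins e x y -> joins e x w -> y = w.
Proof. move=> h1 h2; case: (joins2 h1 h2) => [[_ ->]|[-> ->]] //. Qed.
Lemma joins_self (K : cgraph) (e : cE K) : joins e (csrc e) (ctgt e).
Proof. by left. Qed.

Definition hexc (K : cgraph) (c : 'I_6 -> cV K) (b : 'I_6 -> cE K) : Prop :=
  injective c /\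
  (forall i, is_blue (b i) /\ joins (b i) (c i) (c (suc6 i))) /\
  (forall e, is_blue e -> forall i, incident e (c i) -> exists j, e = b j).

Lemma hexcE (K : cgraph) c b : @hexcycle K c b <-> hexc c b.
Proof.
rewrite /hexcycle /hexc; split=> [[h1 [h2 h3]]|[h1 [h2 h3]]]; split => //; split => //;
  move=> i; move: (h2 i); by rewrite ?succ6E.
Qed.

Definition badj (K : cgraph) (x y : cV K) := exists e, is_blue e /\ joins e x y.

Lemma badj_c (K : cgraph) c b i (y : cV K) : hexc c b ->
  badj (c i) y <-> y = c (suc6 i) \/ y = c (pred6 i).
Proof.
move=> [inj [hb hc]]; split.
  move=> [e [be je]]; have [j ej] := hc e be i (joins_inc je); subst e.
  case: (hb j) => _ jb; case: (joins2 jb je) => [[/inj <- <-]|[<- /inj /suc_inv ->]]; auto.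
move=> [->|->]; first by exists (b i); case: (hb i).
exists (b (pred6 i)); case: (hb (pred6 i)) => h1 h2; split => //.
by apply: joins_sym; rewrite suc_pred in h2.
Qed.

Lemma image_sub (K : cgraph) c b c' b' i j : @hexc K c b -> @hexc K c' b' ->
  c' j = c i -> forall k, exists m, c' k = c m.
Proof.
move=> h h' e k; rewrite -(iter_suc j k); elim: (_ + 6 - _) => [|n [m IH]] /=.
  by exists i.
have [_ [hb' _]] := h'; case: (hb' (iter n suc6 j)) => bb jb.
have : badj (c m) (c' (suc6 (iter n suc6 j))) by exists (b' (iter n suc6 j)); rewrite -IH.
by case/(badj_c _ _ h) => ->; eexists.
Qed.

Lemma hex_meet (K : cgraph) c b c' b' i j : @hexc K c b -> @hexc K c' b' ->
  c' j = c i -> [set c k | k in 'I_6] = [set c' k | k in 'I_6].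
Proof.
move=> h h' e; apply/setP => v; apply/imsetP/imsetP => [[k _ ->]|[k _ ->]].
  by have [m ->] := image_sub h' h (esym e) k; exists m.
by have [m ->] := image_sub h h' e k; exists m.
Qed.

Definition Qo (K : cgraph) (x y : cV K) :=
  y <> x /\ ~ badj x y /\ ~ (exists z, badj x z /\ badj z y).

Lemma Q3 (K : cgraph) c b : @hexc K c b -> Qo (c ord0) (c (mk6 3)).
Proof.
move=> h; have inj := h.1; split; [|split].
- by move/inj/(congr1 val).
- by case/(badj_c _ _ h) => /inj/(congr1 val).
move=> [z [/(badj_c _ _ h) [->|->] /(badj_c _ _ h) [|]]] /inj/(congr1 val) //.
Qed.

Lemma Qk (K : cgraph) c b k : @hexc K c b -> Qo (c ord0) (c k) -> k = mk6 3.
Proof.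
move=> h; ord6 k; move=> [h1 [h2 h3]].
- by case: h1; congr c; vinj.
- by case: h2; apply/(badj_c _ _ h); left; congr c; vinj.
- case: h3; exists (c (mk6 1)); split; apply/(badj_c _ _ h); left; congr c; vinj.
- vinj.
- case: h3; exists (c (mk6 5)); split; apply/(badj_c _ _ h); right; congr c; vinj.
- by case: h2; apply/(badj_c _ _ h); right; congr c; vinj.
Qed.

Lemma opp0 (K : cgraph) c1 b1 c2 b2 : @hexc K c1 b1 -> @hexc K c2 b2 ->
  c1 ord0 = c2 ord0 -> c1 (mk6 3) = c2 (mk6 3).
Proof.
move=> h1 h2 e.
have [m em] := image_sub h1 h2 (esym e) (mk6 3).
have mE : m = mk6 3 by apply: (Qk h1); rewrite -em e; exact: Q3 h2.
by rewrite em mE.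
Qed.

Lemma hexc_rot (K : cgraph) c b m : @hexc K c b ->
  hexc (fun k => c (add6 k m)) (fun k => b (add6 k m)).
Proof.
move=> [inj [hb hc]]; split; [|split].
- by move=> x y /inj /add_inj.
- by move=> i /=; rewrite -suc_add; apply: hb.
move=> e be i /(hc e be) [j ->]; exists (add6 j (mk6 (6 - m))).
by rewrite add_surj.
Qed.

Lemma opp_intro (K : cgraph) c b k : @hexc K c b -> opp (c k) (c (t3 k)).
Proof.
move=> h; exists (fun j => c (add6 j k)), (fun j => b (add6 j k)); split.
  by apply/hexcE/hexc_rot.
by rewrite add0k inord3 add3k.
Qed.

Lemma opp_det (K : cgraph) c b k y : @hexc K c b -> opp (c k) y -> y = c (t3 k).
Proof.
move=> h [c' [b' [/hexcE h' [e1 e2]]]].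
have := opp0 h' (hexc_rot k h); rewrite add0k add3k inord3 in e2 *.
by rewrite -e2; apply.
Qed.

Lemma opp_fun (K : cgraph) (x y y' : cV K) : opp x y -> opp x y' -> y = y'.
Proof.
move=> [c [b [/hexcE h [<- <-]]]] /(opp_det h); rewrite inord3 => ->.
by congr c; vinj.
Qed.

Lemma opp_sym (K : cgraph) (x y : cV K) : opp x y -> opp y x.
Proof.
move=> [c [b [/hexcE h [<- <-]]]]; rewrite inord3.
have := opp_intro (mk6 3) h; have -> : t3 (mk6 3) = ord0 by vinj.
done.
Qed.

Lemma real_bar (K : cgraph) (e : cE K) xb yb : real_white e ->
  opp (csrc e) xb -> opp (ctgt e) yb -> exists e', real_white e' /\ joins e' xb yb.
Proof.
move=> [we [xb' [yb' [e' [o1 [o2 [we' [je' hr]]]]]]]] /(opp_fun o1) <- /(opp_fun o2) <-.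
exists e'; split=> //; split=> //.
case: je' => [[es et]|[es et]].
- exists (csrc e), (ctgt e), e; rewrite es et; do !split => //.
  + exact: opp_sym.
  + exact: opp_sym.
  + by left.
  move=> r rr hi; have: joins r (csrc e) xb' \/ joins r (ctgt e) yb' by apply: hr; tauto.
  by case=> /joins_sym; auto.
- exists (ctgt e), (csrc e), e; rewrite es et; do !split => //.
  + exact: opp_sym.
  + exact: opp_sym.
  + by right.
  move=> r rr hi; have: joins r (csrc e) xb' \/ joins r (ctgt e) yb' by apply: hr; tauto.
  by case=> /joins_sym; auto.
Qed.

Definition family (K : cgraph) (n : nat) (H : nat -> {set cV K})
  (cc : nat -> 'I_6 -> cV K) (bb : nat -> 'I_6 -> cE K) : Prop :=
  (forall i, i < n -> hexc (cc i) (bb i) /\ H i = [set cc i k | k in 'I_6]) /\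
  (forall i j, i < n -> j < n -> H i = H j -> i = j).

Definition WU (K : cgraph) := forall (x : cV K) e e', is_white e -> is_white e' ->
  incident e x -> incident e' x -> e = e'.

Definition Nset (K : cgraph) n (cc : nat -> 'I_6 -> cV K) (bb : nat -> 'I_6 -> cE K)
  (ss : nat -> bool) (e : cE K) := exists i, i < n /\ exists j, e = bb i j /\ odd j = ss i.

Definition Fe (K : cgraph) n (H : nat -> {set cV K}) cc bb ss (e : cE K) :=
  Nset n cc bb ss e \/
  (is_white e /\ exists S, (exists i, i < n /\ S = H i) /\ (csrc e \in S \/ ctgt e \in S)).

Definition Rp (K : cgraph) n (H : nat -> {set cV K}) cc bb ss (x y : cV K) :=
  exists e, Fe n H cc bb ss e /\ ~ derived e /\ joins e x y.
Definition DE (K : cgraph) n (H : nat -> {set cV K}) cc bb ss (x : cV K) :=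
  exists e, Fe n H cc bb ss e /\ derived e /\ incident e x.
Definition link (K : cgraph) (x y : cV K) := exists e, real_white e /\ joins e x y.

Lemma link_sym (K : cgraph) (x y : cV K) : link x y -> link y x.
Proof. by move=> [e [r j]]; exists e; split=> //; apply: joins_sym. Qed.

Lemma cc_same (K : cgraph) n H cc bb i j k m : @family K n H cc bb -> i < n -> j < n ->
  cc i k = cc j m -> i = j /\ k = m.
Proof.
move=> [hf hi] ilt jlt e.
have [hci Hi] := hf i ilt; have [hcj Hj] := hf j jlt.
have ij : i = j by apply: hi => //; rewrite Hi Hj; exact: esym (hex_meet hcj hci e).
subst j; split=> //; exact: hci.1 e.
Qed.

Lemma in_H (K : cgraph) n H cc bb i k : @family K n H cc bb -> i < n -> cc i k \in H i.
Proof. by move=> [hf _] ilt; rewrite (hf i ilt).2; apply: imset_f. Qed.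

Lemma N_step (K : cgraph) n H cc bb ss e i k w : @family K n H cc bb -> i < n ->
  Nset n cc bb ss e -> joins e (cc i k) w -> w = cc i (np (ss i) k).
Proof.
move=> hf ilt [i' [i'lt [j [-> oj]]]] je.
have [hc _] := hf.1 i' i'lt; have [_ jb] := hc.2.1 j.
case: (joins2 jb je) => [[/(cc_same hf i'lt ilt) [ii jk] <-]|[<- /(cc_same hf i'lt ilt) [ii jk]]];
  subst i'; have [n1 n2] := np_of_edge oj.
- by rewrite -jk n1.
- by rewrite -jk n2.
Qed.

Lemma N_out (K : cgraph) n H cc bb ss e v w : @family K n H cc bb ->
  Nset n cc bb ss e -> joins e v w -> (forall i, i < n -> v \notin H i) -> False.
Proof.
move=> hf [i [ilt [j [-> _]]]] je hout.
have [hc _] := hf.1 i ilt; have [_ jb] := hc.2.1 j.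
move: (hout i ilt); case: (joins2 jb je) => [[<- _]|[_ <-]]; by rewrite (in_H _ hf ilt).
Qed.

Lemma Rp_cases (K : cgraph) n H cc bb ss (v w : cV K) : Rp n H cc bb ss v w ->
  (exists e, Nset n cc bb ss e /\ joins e v w) \/ (exists e, real_white e /\ joins e v w).
Proof.
move=> [e [[hN|[hw _]] [hd je]]]; first by left; exists e.
right; exists e; split=> //; apply: NNPP => hr; apply: hd; by split.
Qed.

Lemma W_step (K : cgraph) (v b w : cV K) e : WU K -> link v b -> real_white e ->
  joins e v w -> w = b.
Proof.
move=> wu [e' [r' j']] r je.
have ee : e = e' by apply: (wu v) => //; [exact: r.1 | exact: r'.1 | exact: joins_inc je | exact: joins_inc j'].
by subst e'; apply: joins_other je j'.
Qed.

Lemma DE_real (K : cgraph) n H cc bb ss (v w : cV K) e : WU K ->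
  DE n H cc bb ss v -> real_white e -> joins e v w -> False.
Proof.
move=> wu [d [_ [[wd nd] id]]] r je.
have : d = e by apply: (wu v) => //; [exact: r.1 | exact: joins_inc je].
by move=> de; subst d.
Qed.

Lemma DE_nolink (K : cgraph) n H cc bb ss (v b : cV K) : WU K ->
  DE n H cc bb ss v -> link v b -> False.
Proof. by move=> wu hd [e [r je]]; apply: (DE_real wu hd r je). Qed.


Lemma stepL (K : cgraph) n H cc bb ss i k (b w : cV K) : family n H cc bb -> WU K -> i < n ->
  link (cc i k) b -> Rp n H cc bb ss (cc i k) w -> w = cc i (np (ss i) k) \/ w = b.
Proof.
move=> hf wu ilt hl /Rp_cases [[e [hN je]]|[e [r je]]].
  by left; apply: N_step hf ilt hN je.
by right; apply: W_step wu hl r je.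
Qed.

Lemma stepD (K : cgraph) n H cc bb ss i k (w : cV K) : family n H cc bb -> WU K -> i < n ->
  DE n H cc bb ss (cc i k) -> Rp n H cc bb ss (cc i k) w -> w = cc i (np (ss i) k).
Proof.
move=> hf wu ilt hd /Rp_cases [[e [hN je]]|[e [r je]]].
  by apply: N_step hf ilt hN je.
by case: (DE_real wu hd r je).
Qed.

Lemma stepO (K : cgraph) n H cc bb ss (v b w : cV K) : family n H cc bb -> WU K ->
  (forall i, i < n -> v \notin H i) ->
  link v b -> Rp n H cc bb ss v w -> w = b.
Proof.
move=> hf wu hout hl /Rp_cases [[e [hN je]]|[e [r je]]].
  by case: (N_out hf hN je hout).
by apply: W_step wu hl r je.
Qed.

Lemma stepOD (K : cgraph) n H cc bb ss (v w : cV K) : family n H cc bb -> WU K ->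
  (forall i, i < n -> v \notin H i) ->
  DE n H cc bb ss v -> Rp n H cc bb ss v w -> False.
Proof.
move=> hf wu hout hd /Rp_cases [[e [hN je]]|[e [r je]]].
  by case: (N_out hf hN je hout).
by apply: DE_real wu hd r je.
Qed.

Definition goodC (K : cgraph) n H cc bb ss (x : cV K) :=
  exists C : cV K -> Prop, C x /\
    (forall v w, C v -> Rp n H cc bb ss v w -> C w) /\
    (forall v, C v -> DE n H cc bb ss v -> v = x).

Lemma C1 (K : cgraph) n H cc bb ss (x : cV K) : family n H cc bb -> WU K ->
  (forall i, i < n -> x \notin H i) -> DE n H cc bb ss x -> goodC n H cc bb ss x.
Proof.
move=> hf wu hout hd; exists (fun v => v = x); split=> //; split=> // v w -> hr.
by case: (stepOD hf wu hout hd hr).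
Qed.

Lemma C3 (K : cgraph) n H cc bb ss i m (z : cV K) : family n H cc bb -> WU K -> i < n ->
  DE n H cc bb ss (cc i m) -> link (cc i (np (ss i) m)) z ->
  (forall j, j < n -> z \notin H j) -> goodC n H cc bb ss (cc i m).
Proof.
move=> hf wu ilt hd l1 hz.
exists (fun v => v = cc i m \/ v = cc i (np (ss i) m) \/ v = z); split; first by left.
split.
- move=> v w [->|[->|->]] hr.
  + by right; left; apply: stepD hf wu ilt hd hr.
  + case: (stepL hf wu ilt l1 hr) => ->; rewrite ?np_inv; tauto.
  + by right; left; apply: stepO hf wu hz (link_sym l1) hr.
- move=> v [->|[->|->]] // hv.
  + by case: (DE_nolink wu hv l1).
  + by case: (DE_nolink wu hv (link_sym l1)).
Qed.

Lemma C5 (K : cgraph) n H cc bb ss i m j be (z : cV K) : family n H cc bb -> WU K -> i < n ->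
  j < n -> DE n H cc bb ss (cc i m) -> link (cc i (np (ss i) m)) (cc j be) ->
  link (cc j (np (ss j) be)) z ->
  (forall j, j < n -> z \notin H j) -> goodC n H cc bb ss (cc i m).
Proof.
move=> hf wu ilt jlt hd l1 l2 hz.
exists (fun v => v = cc i m \/ v = cc i (np (ss i) m) \/ v = cc j be \/
  v = cc j (np (ss j) be) \/ v = z); split; first by left.
split.
- move=> v w [->|[->|[->|[->|->]]]] hr.
  + by right; left; apply: stepD hf wu ilt hd hr.
  + case: (stepL hf wu ilt l1 hr) => ->; rewrite ?np_inv; tauto.
  + case: (stepL hf wu jlt (link_sym l1) hr) => ->; rewrite ?np_inv; tauto.
  + case: (stepL hf wu jlt l2 hr) => ->; rewrite ?np_inv; tauto.
  + have := stepO hf wu hz (link_sym l2) hr; tauto.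
- move=> v [->|[->|[->|[->|->]]]] // hv.
  + by case: (DE_nolink wu hv l1).
  + by case: (DE_nolink wu hv (link_sym l1)).
  + by case: (DE_nolink wu hv l2).
  + by case: (DE_nolink wu hv (link_sym l2)).
Qed.

Lemma C7 (K : cgraph) n H cc bb ss i m j be l ga (z : cV K) : family n H cc bb -> WU K ->
  i < n -> j < n -> l < n -> DE n H cc bb ss (cc i m) ->
  link (cc i (np (ss i) m)) (cc j be) ->
  link (cc j (np (ss j) be)) (cc l ga) ->
  link (cc l (np (ss l) ga)) z ->
  (forall j, j < n -> z \notin H j) -> goodC n H cc bb ss (cc i m).
Proof.
move=> hf wu ilt jlt llt hd l1 l2 l3 hz.
exists (fun v => v = cc i m \/ v = cc i (np (ss i) m) \/ v = cc j be \/
  v = cc j (np (ss j) be) \/ v = cc l ga \/ v = cc l (np (ss l) ga) \/ v = z);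
  split; first by left.
split.
- move=> v w [->|[->|[->|[->|[->|[->|->]]]]]] hr.
  + by right; left; apply: stepD hf wu ilt hd hr.
  + case: (stepL hf wu ilt l1 hr) => ->; rewrite ?np_inv; tauto.
  + case: (stepL hf wu jlt (link_sym l1) hr) => ->; rewrite ?np_inv; tauto.
  + case: (stepL hf wu jlt l2 hr) => ->; rewrite ?np_inv; tauto.
  + case: (stepL hf wu llt (link_sym l2) hr) => ->; rewrite ?np_inv; tauto.
  + case: (stepL hf wu llt l3 hr) => ->; rewrite ?np_inv; tauto.
  + have := stepO hf wu hz (link_sym l3) hr; tauto.
- move=> v [->|[->|[->|[->|[->|[->|->]]]]]] // hv.
  + by case: (DE_nolink wu hv l1).
  + by case: (DE_nolink wu hv (link_sym l1)).
  + by case: (DE_nolink wu hv l2).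
  + by case: (DE_nolink wu hv (link_sym l2)).
  + by case: (DE_nolink wu hv l3).
  + by case: (DE_nolink wu hv (link_sym l3)).
Qed.

Lemma joins_incid (K : cgraph) (e : cE K) a b x : joins e a b -> incident e x -> x = a \/ x = b.
Proof. by rewrite /joins /incident => [[[-> ->]|[-> ->]]] [<-|<-]; auto. Qed.

Lemma WU_of (K : cgraph) : pseudohex K -> WU K.
Proof.
move=> [_ [_ [_ [_ hw]]]] x e e' we we' ie ie'.
have [e0 [_ [_ u]]] := hw x; by rewrite (u e) // (u e').
Qed.

Lemma crt_ind' (T : Type) (R : T -> T -> Prop) (P : T -> Prop) :
  (forall x y, R x y -> P x -> P y) -> forall x y, clos_refl_trans T R x y -> P x -> P y.
Proof. by move=> hs x y; elim=> [a b /hs|a|a b c _ IH1 _ IH2] //; auto. Qed.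

Lemma assemble (K : cgraph) n H cc bb ss : family n H cc bb -> WU K ->
  (forall x, DE n H cc bb ss x -> goodC n H cc bb ss x) ->
  @safely_reducible K (fun S => exists i, i < n /\ S = H i).
Proof.
move=> hf wu hg; exists (Nset n cc bb ss); split; [|split].
- move=> e [i [ilt [j [-> _]]]]; have [hc Hi] := hf.1 i ilt; have [bl jb] := hc.2.1 j.
  split=> //; exists (H i); split; first by exists i.
  by case: jb => [[-> ->]|[-> ->]]; rewrite !(in_H _ hf ilt).
- move=> S [i [ilt ->]] x; have [hc Hi] := hf.1 i ilt; rewrite Hi => /imsetP [k _ ->].
  exists (bb i (ej (ss i) k)); split; [|split].
  + by exists i; split=> //; exists (ej (ss i) k); split=> //; rewrite ej_odd.
  + have [_ jb] := hc.2.1 (ej (ss i) k).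
    case: (ej_spec (ss i) k) => [[ek _]|[ek _]]; set j := ej (ss i) k in jb ek *; rewrite {1}ek.
    * exact: joins_inc jb.
    * exact: joins_inc (joins_sym jb).
  + move=> e' [i' [i'lt [j [-> oj]]]] ie.
    have [hc' _] := hf.1 i' i'lt; have [_ jb] := hc'.2.1 j.
    case: (joins_incid jb ie) => /esym /(cc_same hf i'lt ilt) [ii jk]; subst i'.
    * by rewrite -jk ej_self.
    * by rewrite -jk ej_suc.
- move=> F e1 e2 F1 F2 d1 d2.
  have hH : forall x y, DE n H cc bb ss x -> DE n H cc bb ss y ->
      clos_refl_trans _ (Rp n H cc bb ss) x y -> x = y.
    move=> x y hx hy hxy; have [C [Cx [Ccl CD]]] := hg x hx.
    apply/esym; apply: (CD y _ hy); apply: (crt_ind' (P := C)) hxy Cx => a b hab Ca; apply: Ccl Ca hab.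
  have DE1s : DE n H cc bb ss (csrc e1) by exists e1; split=> //; split=> //; left.
  have DE1t : DE n H cc bb ss (ctgt e1) by exists e1; split=> //; split=> //; right.
  have DE2 : DE n H cc bb ss (csrc e2) by exists e2; split=> //; split=> //; left.
  pose S v := clos_refl_trans _ (Rp n H cc bb ss) (csrc e1) v \/
              clos_refl_trans _ (Rp n H cc bb ss) (ctgt e1) v.
  move=> hr; have : S (csrc e2).
    apply: (crt_ind' (P := S)) hr _; last by left; apply: rt_refl.
    move=> a b [e [Fe je]] Sa.
    case: (classic (derived e)) => de; last first.
      have rab : Rp n H cc bb ss a b by exists e.
      by case: Sa => h; [left|right]; apply: rt_trans h (rt_step _ _ _ _ rab).
    have DEa : DE n H cc bb ss a by exists e; split=> //; split=> //; exact: joins_inc je.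
    have ee1 : forall v, v = csrc e1 \/ v = ctgt e1 -> incident e v -> e = e1.
      move=> v hv iv; apply: (wu v) => //; [exact: de.1 | exact: d1.1 |].
      by case: hv => ->; [left|right].
    case: Sa => h.
    * have av := hH _ _ DE1s DEa h; subst a.
      have ee := ee1 _ (or_introl erefl) (joins_inc je); subst e.
      by case: (joins2 (joins_self e1) je) => [[_ <-]|[<- _]]; [right|left]; apply: rt_refl.
    * have av := hH _ _ DE1t DEa h; subst a.
      have ee := ee1 _ (or_intror erefl) (joins_inc je); subst e.
      by case: (joins2 (joins_self e1) je) => [[_ <-]|[<- _]]; [right|left]; apply: rt_refl.
  case=> h.
  + have := hH _ _ DE1s DE2 h => es; apply: (wu (csrc e2)); [exact: d1.1|exact: d2.1| |by left].
    by rewrite -es; left.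
  + have := hH _ _ DE1t DE2 h => es; apply: (wu (csrc e2)); [exact: d1.1|exact: d2.1| |by left].
    by rewrite -es; right.
Qed.

Definition img (K : cgraph) (c : 'I_6 -> cV K) : {set cV K} := [set c k | k in 'I_6].
Definition plink (K : cgraph) (c c' : 'I_6 -> cV K) k m :=
  link (c k) (c' m) /\ link (c (t3 k)) (c' (t3 m)).

Lemma plink_t3 (K : cgraph) (c c' : 'I_6 -> cV K) k m : plink c c' k m -> plink c c' (t3 k) (t3 m).
Proof. by rewrite /plink !t3t3 => [[? ?]]. Qed.
Lemma plink_sym (K : cgraph) (c c' : 'I_6 -> cV K) k m : plink c c' k m -> plink c' c m k.
Proof. by move=> [? ?]; split; apply: link_sym. Qed.

Lemma link_fun (K : cgraph) (x y y' : cV K) : WU K -> link x y -> link x y' -> y = y'.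
Proof. move=> wu l [e [r je]]; apply/esym; exact: W_step wu l r je. Qed.

Lemma hex_of (K : cgraph) (S : {set cV K}) : is_hex S -> exists c b, hexc c b /\ S = img c.
Proof. by move=> [c [b [/hexcE h ->]]]; exists c, b. Qed.

Lemma adj_plink (K : cgraph) c b c' b' : @hexc K c b -> hexc c' b' ->
  GKadj (img c) (img c') -> exists k m, plink c c' k m.
Proof.
move=> h h' [_ [_ [_ [e [r hj]]]]].
case: hj => [[/imsetP [k _ ek] /imsetP [m _ em]]|[/imsetP [m _ em] /imsetP [k _ ek]]];
  exists k, m; split.
- by exists e; split=> //; rewrite -ek -em; left.
- have o1 := opp_intro k h; have o2 := opp_intro m h'; rewrite -ek in o1; rewrite -em in o2.
  by have [e' [r' j']] := real_bar r o1 o2; exists e'.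
- by exists e; split=> //; rewrite -ek -em; right.
- have o1 := opp_intro k h; have o2 := opp_intro m h'; rewrite -ek in o1; rewrite -em in o2.
  by have [e' [r' j']] := real_bar r o2 o1; exists e'; split=> //; apply: joins_sym.
Qed.

Lemma GKadj_sym (K : cgraph) (S T : {set cV K}) : GKadj S T -> GKadj T S.
Proof.
move=> [hS [hT [ne [e [r hj]]]]]; do 3 split => //; first by move/esym.
by exists e; split=> //; case: hj; rewrite /GKjoins; tauto.
Qed.

Lemma pairs_diff (K : cgraph) c b c1 b1 c2 b2 k1 m1 k2 m2 : WU K ->
  @hexc K c b -> hexc c1 b1 -> hexc c2 b2 -> img c1 <> img c2 ->
  plink c c1 k1 m1 -> plink c c2 k2 m2 -> pr k1 <> pr k2.
Proof.
move=> wu h h1 h2 ne [l1 l1'] [l2 l2'] /pr_eq [ek|ek]; subst k2.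
- by apply: ne; have e := link_fun wu l1 l2; exact: hex_meet h1 h2 (esym e).
- by apply: ne; have e := link_fun wu l1' l2; exact: hex_meet h1 h2 (esym e).
Qed.

Lemma three (a b m m' : 'I_6) : pr a <> pr b -> pr m <> pr a -> pr m <> pr b ->
  pr m' <> pr m -> pr m' = pr a \/ pr m' = pr b.
Proof.
move=> h1 h2 h3 h4; have := pr_lt a; have := pr_lt b; have := pr_lt m; have := pr_lt m'.
lia.
Qed.

Lemma plink_pr (K : cgraph) (c c' : 'I_6 -> cV K) k m j : plink c c' k m -> pr j = pr k ->
  exists y, link (c j) y /\ (y = c' m \/ y = c' (t3 m)).
Proof.
move=> [l1 l2] /esym /pr_eq [->|->]; [exists (c' m) | exists (c' (t3 m))]; tauto.
Qed.

Lemma outside (K : cgraph) n H cc bb cA bA : family n H cc bb -> @hexc K cA bA ->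
  (forall j, j < n -> img cA <> H j) -> forall r j, j < n -> cA r \notin H j.
Proof.
move=> hf hA hne r j jlt; apply/negP => hin.
have [hc Hj] := hf.1 j jlt; move: hin; rewrite Hj => /imsetP [k _ e].
apply: (hne j jlt); rewrite Hj; exact: esym (hex_meet hc hA e).
Qed.

Lemma DE_pair (K : cgraph) n H cc bb ss (c' : 'I_6 -> cV K) i m k r : WU K ->
  plink (cc i) c' k r -> DE n H cc bb ss (cc i m) -> pr m <> pr k.
Proof.
move=> wu pl hd e; have [y [l _]] := plink_pr pl e; exact: DE_nolink wu hd l.
Qed.

Lemma in_or_out (K : cgraph) n (H : nat -> {set cV K}) (x : cV K) :
  (exists i, i < n /\ x \in H i) \/ (forall i, i < n -> x \notin H i).
Proof.
case: (classic (exists i, i < n /\ x \in H i)) => h; [by left | right].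
by move=> i ilt; apply/negP => hx; apply: h; exists i.
Qed.

Lemma leaf_out (K : cgraph) n (H : nat -> {set cV K}) cc bb ss i m cA bA cB bB kA rA kB rB :
  family n H cc bb -> WU K -> i < n -> hexc cA bA -> hexc cB bB ->
  (forall j, j < n -> img cA <> H j) -> (forall j, j < n -> img cB <> H j) ->
  pr kA <> pr kB ->
  plink (cc i) cA kA rA -> plink (cc i) cB kB rB ->
  DE n H cc bb ss (cc i m) -> goodC n H cc bb ss (cc i m).
Proof.
move=> hf wu ilt hA hB oA oB dAB pA pB hd.
have mA := DE_pair wu pA hd; have mB := DE_pair wu pB hd.
case: (three dAB mA mB (@np_pr (ss i) m)) => e.
- have [y [l [ey|ey]]] := plink_pr pA e; subst y; exact: C3 hf wu ilt hd l (outside hf hA oA _).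
- have [y [l [ey|ey]]] := plink_pr pB e; subst y; exact: C3 hf wu ilt hd l (outside hf hB oB _).
Qed.

Lemma dot_core (K : cgraph) (H : nat -> {set cV K}) c0 b0 cA bA cB bB kA rA kB rB :
  pseudohex K -> hexc c0 b0 -> H 0 = img c0 -> hexc cA bA -> hexc cB bB ->
  img cA <> H 0 -> img cB <> H 0 -> img cA <> img cB ->
  plink c0 cA kA rA -> plink c0 cB kB rB ->
  @safely_reducible K (fun S => exists i, i < 1 /\ S = H i).
Proof.
move=> ph h0 H0 hA hB nA nB nAB pA pB; have wu := WU_of ph.
pose cc := fun _ : nat => c0; pose bb := fun _ : nat => b0; pose ss := fun _ : nat => false.
have hf : family 1 H cc bb.
  split; first by move=> i; rewrite ltnS leqn0 => /eqP ->.
  by move=> i j; rewrite !ltnS !leqn0 => /eqP -> /eqP ->.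
have oA : forall j, j < 1 -> img cA <> H j by move=> j; rewrite ltnS leqn0 => /eqP ->.
have oB : forall j, j < 1 -> img cB <> H j by move=> j; rewrite ltnS leqn0 => /eqP ->.
apply: (assemble (ss := ss) hf wu) => x hx.
case: (in_or_out 1 H x) => [[i [ilt xin]]|hout]; last exact: C1 hf wu hout hx.
move: ilt xin; rewrite ltnS leqn0 => /eqP -> ; rewrite H0 => /imsetP [m _ xm]; subst x.
exact: (leaf_out (i := 0) hf wu (isT : 0 < 1) hA hB oA oB (pairs_diff wu h0 hA hB nAB pA pB) pA pB hx).
Qed.

Lemma pair_third (a b m : 'I_6) : pr a <> pr b -> pr m <> pr a -> pr m <> pr b -> forall s,
  pr (np s m) = pr a \/ pr (np s m) = pr b.
Proof. move=> h1 h2 h3 s; exact: three h1 h2 h3 (@np_pr s m). Qed.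

Lemma np_other s (k b : 'I_6) : pr k <> pr b -> pr (np s k) <> pr b -> pr (np s (t3 k)) = pr b.
Proof.
move=> h1 h2; have h3 := @np_pr s k.
have := three (a := k) (b := b) (m := np s k) (m' := np s (t3 k)) h1 h3 h2 (@np_t3 s k).
case=> // e; have := @np_pr s (t3 k); by rewrite pr_t3 e.
Qed.

Lemma choose_s (k b : 'I_6) : exists s, pr (np s k) <> pr b.
Proof.
case: (pr (np false k) =P pr b) => e; last by exists false.
by exists true; have := @np_neg false k; rewrite e.
Qed.

Lemma subfork_core (K : cgraph) (H : nat -> {set cV K}) c0 b0 c1 b1 cA bA cB bB
    k ka kA rA kB rB :
  pseudohex K -> hexc c0 b0 -> hexc c1 b1 -> H 0 = img c0 -> H 1 = img c1 -> H 0 <> H 1 ->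
  hexc cA bA -> hexc cB bB ->
  img cA <> H 0 -> img cB <> H 0 -> img cA <> H 1 -> img cB <> H 1 ->
  plink c0 c1 k ka -> plink c0 cA kA rA -> plink c1 cB kB rB ->
  @safely_reducible K (fun S => exists i, i < 2 /\ S = H i).
Proof.
move=> ph h0 h1 H0 H1 H01 hA hB nA0 nB0 nA1 nB1 p01 pA pB; have wu := WU_of ph.
have d0 : pr k <> pr kA by apply: (pairs_diff wu h0 h1 hA _ p01 pA); rewrite -H1 => e; apply: nA1; rewrite e.
have d1 : pr ka <> pr kB by apply: (pairs_diff wu h1 h0 hB _ (plink_sym p01) pB); rewrite -H0 => e; apply: nB0; rewrite e.
wlog nk : k ka p01 d0 d1 / pr (np false k) <> pr kA.
  move=> W; case: (pr (np false k) =P pr kA) => e; last exact: (W k ka p01 d0 d1 e).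
  apply: (W (t3 k) (t3 ka)); rewrite ?pr_t3 //; first exact: plink_t3.
  by have := @np_t3 false k; rewrite e.
have [s1 hs1] := choose_s (t3 ka) kB.
have a0 : pr (np false (t3 k)) = pr kA := np_other d0 nk.
have a1 : pr (np s1 ka) = pr kB.
  by have := np_other (k := t3 ka) (b := kB) (s := s1); rewrite t3t3 pr_t3; apply.
pose cc := fun i : nat => if i == 0 then c0 else c1.
pose bb := fun i : nat => if i == 0 then b0 else b1.
pose ss := fun i : nat => if i == 0 then false else s1.
have hf : family 2 H cc bb.
  split; first by case=> [|[|i]] //.
  by case=> [|[|i]] [|[|j]] // _ _ e; case: H01; rewrite e.
have oA : forall j, j < 2 -> img cA <> H j by case=> [|[|j]].
have oB : forall j, j < 2 -> img cB <> H j by case=> [|[|j]].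
apply: (assemble (ss := ss) hf wu) => x hx.
case: (in_or_out 2 H x) => [[i [ilt xin]]|hout]; last exact: C1 hf wu hout hx.
case: i ilt xin => [|[|i]] // _.
- rewrite H0 => /imsetP [m _ xm]; subst x.
  have hx' : DE 2 H cc bb ss (cc 0 m) by [].
  have m1 := DE_pair wu (i := 0) p01 hx'; have m2 := DE_pair wu (i := 0) pA hx'.
  case: (pair_third d0 m1 m2 false) => e.
  + case: (pr_eq (esym e)) => em.
    * have [y [l [ey|ey]]] := plink_pr pB a1; subst y.
      - apply: (C5 (i := 0) (j := 1) (be := ka) hf wu _ _ hx' _ l (outside hf hB oB _)) => //.
        by rewrite /= em; exact: p01.1.
      - apply: (C5 (i := 0) (j := 1) (be := ka) hf wu _ _ hx' _ l (outside hf hB oB _)) => //.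
        by rewrite /= em; exact: p01.1.
    * by move: (np_inv false m); rewrite em => em'; move: a0; rewrite em'.
  + have [y [l [ey|ey]]] := plink_pr pA e; subst y;
      exact: (C3 (i := 0) hf wu _ hx' l (outside hf hA oA _)).
- rewrite H1 => /imsetP [m _ xm]; subst x.
  have hx' : DE 2 H cc bb ss (cc 1 m) by [].
  have m1 := DE_pair wu (i := 1) (plink_sym p01) hx'; have m2 := DE_pair wu (i := 1) pB hx'.
  case: (pair_third d1 m1 m2 s1) => e.
  + case: (pr_eq (esym e)) => em.
    * by move: (np_inv s1 m); rewrite em => em'; move: a1; rewrite em'.
    * have [y [l [ey|ey]]] := plink_pr pA a0; subst y.
      - apply: (C5 (i := 1) (j := 0) (be := t3 k) hf wu _ _ hx' _ l (outside hf hA oA _)) => //.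
        by rewrite /= em; exact: (link_sym p01.2).
      - apply: (C5 (i := 1) (j := 0) (be := t3 k) hf wu _ _ hx' _ l (outside hf hA oA _)) => //.
        by rewrite /= em; exact: (link_sym p01.2).
  + have [y [l [ey|ey]]] := plink_pr pB e; subst y;
      exact: (C3 (i := 1) hf wu _ hx' l (outside hf hB oB _)).
Qed.

Definition sel (k b : 'I_6) : bool := pr (np false k) == pr b.
Lemma sel_ok k b : pr (np (sel k b) k) <> pr b.
Proof.
rewrite /sel; case: (pr (np false k) =P pr b) => e //.
by have := @np_neg false k; rewrite e.
Qed.

Lemma star_core (K : cgraph) (H : nat -> {set cV K}) (cc : nat -> 'I_6 -> cV K) bb
    (cA : nat -> 'I_6 -> cV K) (bA : nat -> 'I_6 -> cE K) (mu kk kO rO : nat -> 'I_6) :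
  pseudohex K ->
  (forall i, i < 4 -> hexc (cc i) (bb i) /\ H i = img (cc i)) ->
  (forall i j, i < 4 -> j < 4 -> H i = H j -> i = j) ->
  (forall j, 0 < j < 4 -> hexc (cA j) (bA j) /\ forall i, i < 4 -> img (cA j) <> H i) ->
  (forall j, 0 < j < 4 -> plink (cc 0) (cc j) (mu j) (kk j)) ->
  (forall j, 0 < j < 4 -> plink (cc j) (cA j) (kO j) (rO j)) ->
  @safely_reducible K (fun S => exists i, i < 4 /\ S = H i).
Proof.
move=> ph hc hinj hA p0 pO; have wu := WU_of ph.
have hf : family 4 H cc bb by [].
pose mu' j := if odd (mu j) then t3 (mu j) else mu j.
pose kk' j := if odd (mu j) then t3 (kk j) else kk j.
have pC : forall j, 0 < j < 4 -> plink (cc 0) (cc j) (mu' j) (kk' j) /\ ~~ odd (mu' j).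
  move=> j hj; rewrite /mu' /kk'; case: ifP => od.
    by split; [apply: plink_t3; apply: p0 | rewrite odd_t3 od].
  by split; [apply: p0 | rewrite od].
have h0 := (hc 0 isT).1.
have dj : forall j, 0 < j < 4 -> pr (kk' j) <> pr (kO j).
  move=> j hj; have jl : j < 4 by case/andP: hj.
  apply: (pairs_diff wu (hc j jl).1 h0 (hA j hj).1 _ (plink_sym (pC j hj).1) (pO j hj)).
  rewrite -(hc 0 isT).2 => e; apply: ((hA j hj).2 0 isT); by rewrite e.
pose ss i := if i == 0 then false else sel (kk' i) (kO i).
have sj : forall j, 0 < j < 4 -> pr (np (ss j) (kk' j)) <> pr (kO j).
  move=> j /andP [j0 _]; rewrite /ss; case: eqP j0 => [->|_ _] //; apply: sel_ok.
have aj : forall j, 0 < j < 4 -> pr (np (ss j) (t3 (kk' j))) = pr (kO j).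
  by move=> j hj; apply: np_other (dj j hj) (sj j hj).
have Qd : forall i j, 0 < i < 4 -> 0 < j < 4 -> i <> j -> pr (mu' i) <> pr (mu' j).
  move=> i j hi hj ij; have il : i < 4 by case/andP: hi.
  have jl : j < 4 by case/andP: hj.
  apply: (pairs_diff wu h0 (hc i il).1 (hc j jl).1 _ (pC i hi).1 (pC j hj).1).
  by rewrite -(hc i il).2 -(hc j jl).2 => /(hinj i j il jl).
have cover : forall m, exists j, 0 < j < 4 /\ pr m = pr (mu' j).
  move=> m; case: (pr m =P pr (mu' 1)) => e1; first by exists 1.
  case: (pr m =P pr (mu' 2)) => e2; first by exists 2.
  case: (pr m =P pr (mu' 3)) => e3; first by exists 3.
  have := Qd 1 2 isT isT; have := Qd 1 3 isT isT; have := Qd 2 3 isT isT.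
  have := pr_lt m; have := pr_lt (mu' 1); have := pr_lt (mu' 2); have := pr_lt (mu' 3).
  lia.
have oA : forall j, 0 < j < 4 -> forall r i, i < 4 -> cA j r \notin H i.
  by move=> j hj r i il; apply: (outside hf (hA j hj).1 (hA j hj).2).
apply: (assemble (ss := ss) hf wu) => x hx.
case: (in_or_out 4 H x) => [[i [ilt xin]]|hout]; last exact: C1 hf wu hout hx.
move: xin; rewrite (hc i ilt).2 => /imsetP [m _ xm]; subst x.
case: (posnP i) => [i0|ipos].
  subst i; have [j [hj e]] := cover m.
  by case: (DE_pair wu (i := 0) (pC j hj).1 hx).
have hi : 0 < i < 4 by rewrite ipos ilt.
have m1 := DE_pair wu (plink_sym (pC i hi).1) hx.
have m2 := DE_pair wu (pO i hi) hx.
case: (pair_third (dj i hi) m1 m2 (ss i)) => e; last first.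
  have [y [l [ey|ey]]] := plink_pr (pO i hi) e; subst y;
    exact: (C3 hf wu ilt hx l (oA i hi _)).
case: (pr_eq (esym e)) => em; last first.
  by move: (np_inv (ss i) m); rewrite em => em'; case: m2; rewrite -em' (aj i hi).
have [j [hj ej]] := cover (np false (mu' i)).
have jl : j < 4 by case/andP: hj.
have ou : odd (np false (mu' i)) by rewrite np_odd (pC i hi).2.
case: (pr_eq (esym ej)) => eu.
  by move: ou; rewrite eu; have := (pC j hj).2; case: odd.
have l1 : link (cc i (np (ss i) m)) (cc 0 (mu' i)) by rewrite em; exact: link_sym (pC i hi).1.1.
have l2 : link (cc 0 (np (ss 0) (mu' i))) (cc j (t3 (kk' j))) by rewrite /= eu; exact: (pC j hj).1.2.
have [y [l3 [ey|ey]]] := plink_pr (pO j hj) (aj j hj); subst y;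
  exact: (C7 hf wu ilt (isT : 0 < 4) jl hx l1 l2 l3 (oA j hj _)).
Qed.

Lemma get_plink (K : cgraph) (S T : {set cV K}) c b c' b' : hexc c b -> S = img c ->
  hexc c' b' -> T = img c' -> GKadj S T -> exists k m, plink c c' k m.
Proof. by move=> h -> h' ->; apply: (adj_plink h h'). Qed.

Theorem mainTheorem7 (t : forktype) (K K' : cgraph)
    (f1 : {set cV K'} -> {set cV K}) (f2 : nat -> {set cV K}) :
  @proper_pseudohex K -> @proper_pseudohex K' -> @L_addition t K K' f1 f2 ->
  @safely_reducible K (fun S => exists i, i < L_size t /\ S = f2 i).
Proof.
move=> [phK _] _ [s [att [hb [hatt [hattinj [hf1 [hf2 [hf1inj [hf2inj [hdiff [hcov
  [hadj11 [hadj22 hadj12]]]]]]]]]]]]].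
have adjA : forall k, k < size s -> nth 0 s k < L_size t ->
    GKadj (f1 (att k)) (f2 (nth 0 s k)).
  move=> k ks ns; apply/(hadj12 _ _ (hatt k ks).1 ns); by exists k.
clear hcov; case: t hb hf2 hf2inj hdiff hadj22 hadj12 adjA => /= hb hf2 hf2inj hdiff hadj22 hadj12 adjA.
-
  subst s.
  have hA : forall k, k < 3 -> is_hex (att k) by move=> k kl; exact: (hatt k kl).1.
  have [c0 [b0 [h0 F0]]] := hex_of (hf2 0 isT).
  have [c1 [b1 [h1 F1]]] := hex_of (hf2 1 isT).
  have [c2 [b2 [h2 F2]]] := hex_of (hf2 2 isT).
  have [c3 [b3 [h3 F3]]] := hex_of (hf2 3 isT).
  have [a1 [e1 [g1 G1]]] := hex_of (hf1 _ (hA 0 isT)).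
  have [a2 [e2 [g2 G2]]] := hex_of (hf1 _ (hA 1 isT)).
  have [a3 [e3 [g3 G3]]] := hex_of (hf1 _ (hA 2 isT)).
  have adjC : forall j, 0 < j < 4 -> GKadj (f2 0) (f2 j).
    by move=> j /andP [j0 j4]; apply/(hadj22 0 j isT j4); rewrite /= -lt0n j0.
  have [m1 [k1 q1]] := get_plink h0 F0 h1 F1 (adjC 1 isT).
  have [m2 [k2 q2]] := get_plink h0 F0 h2 F2 (adjC 2 isT).
  have [m3 [k3 q3]] := get_plink h0 F0 h3 F3 (adjC 3 isT).
  have [o1 [r1 w1]] := get_plink h1 F1 g1 G1 (GKadj_sym (adjA 0 isT isT)).
  have [o2 [r2 w2]] := get_plink h2 F2 g2 G2 (GKadj_sym (adjA 1 isT isT)).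
  have [o3 [r3 w3]] := get_plink h3 F3 g3 G3 (GKadj_sym (adjA 2 isT isT)).
  pose cc i := match i with 0 => c0 | 1 => c1 | 2 => c2 | _ => c3 end.
  pose bb i := match i with 0 => b0 | 1 => b1 | 2 => b2 | _ => b3 end.
  pose cA i := match i with 1 => a1 | 2 => a2 | _ => a3 end.
  pose bA i := match i with 1 => e1 | 2 => e2 | _ => e3 end.
  pose mu i := match i with 1 => m1 | 2 => m2 | _ => m3 end.
  pose kk i := match i with 1 => k1 | 2 => k2 | _ => k3 end.
  pose kO i := match i with 1 => o1 | 2 => o2 | _ => o3 end.
  pose rO i := match i with 1 => r1 | 2 => r2 | _ => r3 end.
  apply: (star_core (cc := cc) (bb := bb) (cA := cA) (bA := bA) (mu := mu) (kk := kk)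
           (kO := kO) (rO := rO) phK).
  + by case=> [|[|[|[|i]]]].
  + by move=> i j il jl; apply: hf2inj.
  + have nd : forall k i, k < 3 -> i < 4 -> f1 (att k) <> f2 i.
      by move=> k i kl il; apply: hdiff (hA k kl) il.
    case=> [|[|[|[|j]]]] // _; split=> // i il; rewrite /= -?G1 -?G2 -?G3; exact: nd.
  + by case=> [|[|[|[|j]]]].
  + by case=> [|[|[|[|j]]]].
-
  subst s.
  have [c0 [b0 [h0 F0]]] := hex_of (hf2 0 isT).
  have [c1 [b1 [h1 F1]]] := hex_of (hf2 1 isT).
  have hA0 : is_hex (att 0) by exact: (hatt 0 isT).1.
  have hA1 : is_hex (att 1) by exact: (hatt 1 isT).1.
  have [a0 [e0 [g0 G0]]] := hex_of (hf1 _ hA0).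
  have [a1 [e1 [g1 G1]]] := hex_of (hf1 _ hA1).
  have [k [ka p01]] := get_plink h0 F0 h1 F1 ((hadj22 0 1 isT isT).2 isT).
  have [kA [rA pA]] := get_plink h0 F0 g0 G0 (GKadj_sym (adjA 0 isT isT)).
  have [kB [rB pB]] := get_plink h1 F1 g1 G1 (GKadj_sym (adjA 1 isT isT)).
  apply: (subfork_core phK h0 h1 F0 F1 _ g0 g1 _ _ _ _ p01 pA pB).
  + by move/(hf2inj 0 1 isT isT).
  + by rewrite -G0; apply: hdiff.
  + by rewrite -G1; apply: hdiff.
  + by rewrite -G0; apply: hdiff.
  + by rewrite -G1; apply: hdiff.
-
  have s2 : 1 < size s by case: hb => ->.
  have n0 : nth 0 s 0 = 0 by case: hb => ->.
  have n1 : nth 0 s 1 = 0 by case: hb => ->.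
  have [c0 [b0 [h0 F0]]] := hex_of (hf2 0 isT).
  have hA0 : is_hex (att 0) by exact: (hatt 0 (ltnW s2)).1.
  have hA1 : is_hex (att 1) by exact: (hatt 1 s2).1.
  have [a0 [e0 [g0 G0]]] := hex_of (hf1 _ hA0).
  have [a1 [e1 [g1 G1]]] := hex_of (hf1 _ hA1).
  have ad0 := adjA 0 (ltnW s2); rewrite n0 in ad0.
  have ad1 := adjA 1 s2; rewrite n1 in ad1.
  have [kA [rA pA]] := get_plink h0 F0 g0 G0 (GKadj_sym (ad0 isT)).
  have [kB [rB pB]] := get_plink h0 F0 g1 G1 (GKadj_sym (ad1 isT)).
  apply: (dot_core phK h0 F0 g0 g1 _ _ _ pA pB).
  + by rewrite -G0; apply: hdiff.
  + by rewrite -G1; apply: hdiff.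
  + rewrite -G0 -G1 => /(hf1inj _ _ hA0 hA1) /(hattinj 0 1 (ltnW s2) s2) //.
Qed.
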